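(* Let $\{X_t\}_{t\in\mathbb{R}}$ be Banach spaces, $\{S(t,s):X_s\to X_t\}_{s\le t}$ a process with a pullback absorber $\mathfrak{B}$, and suppose that for all $t$ and $s\le t$ there are $P(t,s),N(t,s)\subset X_t$ with $S(t,s)\mathfrak{B}(s)=P(t,s)+N(t,s)$, $\lim_{s\to-\infty}\|P(t,s)\|_{X_t}=0$ for every $t$, and $N(t,s)$ compact in $X_t$. Let $\{Y_t\}_{t\in\mathbb{R}}$ be Banach spaces such that for every $t\in\mathbb{R}$: $Y_t$ is compactly embedded in $X_t$; the canonical injections $\mathcal{I}_s:Y_s\to X_s$ satisfy $\sup_{s\le t}\|\mathcal{I}_s\|_{\mathcal{L}(Y_s,X_s)}=C(t)<\infty$; and closed balls of $Y_t$ are closed in $X_t$. If moreover $$\sup_{s\in(-\infty,t]}\|N(t,s)\|_{Y_t}=h(t)<\infty\qquad\forall t\in\mathbb{R},$$ then the time-dependent global attractor $\mathcal{A}=\omega_{\mathfrak{B}}$ is a pullback-bounded family, it is the unique time-dependent global attractor within the class of pullback-bounded families, and $\|\mathcal{A}(t)\|_{Y_t}\le h(t)$ for every $t\in\mathbb{R}$.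
   Context: A process is a family of maps $S(t,s):X_s\to X_t$, $s\le t$, with $S(t,t)=\mathrm{Id}$, each $S(t,s)$ continuous, and $S(\tau,t)S(t,s)=S(\tau,s)$ for $s\le t\le\tau$. For $D\subset X$, $\|D\|_X=\sup_{z\in D}\|z\|_X$ (with $\|D\|_{Y_t}=\infty$ if $D\not\subset Y_t$); $P+N=\{p+n:p\in P,n\in N\}$. A family $\mathcal{B}=\{\mathcal{B}(t)\subset X_t\}$ is pullback-bounded if $\sup_{s\le t}\|\mathcal{B}(s)\|_{X_s}<\infty$ for each $t$. A pullback-bounded family $\mathfrak{B}$ is a pullback absorber if for every pullback-bounded $\mathcal{B}$ and every $t$ there is $t_0\le t$ with $S(t,s)\mathcal{B}(s)\subset\mathfrak{B}(t)$ for all $s\le t_0$. A time-dependent global attractor is a family of compact sets $\mathcal{A}(t)\subset X_t$ with $S(t,s)\mathcal{A}(s)=\mathcal{A}(t)$ for $s\le t$ and $\lim_{s\to-\infty}\mathrm{dist}_{X_t}(S(t,s)\mathcal{B}(s),\mathcal{A}(t))=0$ for every pullback-bounded $\mathcal{B}$ and every $t$, where $\mathrm{dist}_X(A,B)=\sup_{x\in A}\inf_{y\in B}\|x-y\|_X$. $\omega_{\mathfrak{B}}(t)=\bigcap_{\tau\le t}\overline{\bigcup_{s\le\tau}S(t,s)\mathfrak{B}(s)}$ (closure in $X_t$); under the stated hypotheses it is a time-dependent global attractor. *)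

(* Defs.v *)
From HB Require Import structures.
From mathcomp Require Import all_boot all_order all_algebra.
From mathcomp Require Import all_classical all_reals all_analysis.
Set Implicit Arguments. Unset Strict Implicit. Unset Printing Implicit Defensive.
Import Order.TTheory GRing.Theory Num.Theory.
Import numFieldNormedType.Exports.
Local Open Scope classical_set_scope.
Local Open Scope ring_scope.

Section Defs.
Variable R : realType.

(* ||D||_X = sup_{z in D} ||z||, in [0, +oo] (sup of the empty set is 0). *)
Definition setnorm (V : normedModType R) (D : set V) : \bar R :=
  ereal_sup (0%E |` [set (`|z|)%:E | z in D]).

Definition Ysetnorm (Y X : normedModType R) (iota : Y -> X) (D : set X) : \bar R :=
  if `[< D `<=` range iota >] then
    ereal_sup (0%E |` [set (`|y|)%:E | y in iota @^-1` D])
  else +oo%E.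

Definition hdist (V : normedModType R) (A B : set V) : \bar R :=
  ereal_sup (0%E |` [set ereal_inf [set (`|x - y|)%:E | y in B] | x in A]).

Variable X : R -> normedModType R.

Definition is_process (S : forall t s : R, X s -> X t) : Prop :=
  (forall t (x : X t), S t t x = x) /\
  (forall t s, s <= t -> continuous (S t s)) /\
  (forall tau t s, s <= t -> t <= tau ->
     forall x : X s, S tau t (S t s x) = S tau s x).

Definition pullback_bounded (B : forall t : R, set (X t)) : Prop :=
  forall t : R, exists M : R, forall s : R, s <= t -> (setnorm (B s) <= M%:E)%E.

Definition pullback_absorber (S : forall t s : R, X s -> X t)
  (B : forall t : R, set (X t)) : Prop :=
  pullback_bounded B /\
  forall D : forall t : R, set (X t), pullback_bounded D ->
    forall t : R, exists t0 : R, t0 <= t /\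
      forall s : R, s <= t0 -> S t s @` D s `<=` B t.

Definition is_tdga (S : forall t s : R, X s -> X t)
  (A : forall t : R, set (X t)) : Prop :=
  (forall t, compact (A t)) /\
  (forall t s, s <= t -> S t s @` A s = A t) /\
  (forall D : forall t : R, set (X t), pullback_bounded D ->
     forall t : R, hdist (S t s @` D s) (A t) @[s --> -oo] --> 0%E).

Definition omega_lim (S : forall t s : R, X s -> X t)
  (B : forall t : R, set (X t)) (t : R) : set (X t) :=
  \bigcap_(tau in `]-oo, t]) closure (\bigcup_(s in `]-oo, tau]) (S t s @` B s)).

End Defs.

Arguments omega_lim [R X] S B t.

(* Main.v *)
Require Import Defs.
From HB Require Import structures.
From mathcomp Require Import all_boot all_order all_algebra.
From mathcomp Require Import all_classical all_reals all_analysis.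
From mathcomp Require Import lra.
Import Order.TTheory GRing.Theory Num.Theory.
Import numFieldNormedType.Exports.
Local Open Scope classical_set_scope.
Local Open Scope ring_scope.

Section H4.
Variable R : realType.

Lemma nbhs_normE (V : normedModType R) (x : V) (B : set V) :
  nbhs x B <-> exists2 e : R, 0 < e & forall z, `|x - z| < e -> B z.
Proof.
rewrite -nbhs_nbhs_norm; split => -[e e0 H]; exists e => //.
Qed.

Lemma closureN (V : normedModType R) (A : set V) (x : V) :
  closure A x <-> forall e : R, 0 < e -> exists2 a, A a & `|x - a| < e.
Proof.
split.
- move=> cl e e0.
  have [|a [Aa Ba]] := cl [set z | `|x - z| < e].
    by apply/nbhs_normE; exists e.
  by exists a.
- move=> H B /nbhs_normE [e e0 HB].
  have [a Aa xa] := H e e0.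
  by exists a; split => //; apply: HB.
Qed.

Lemma tri (V : normedModType R) (x y z : V) : `|x - z| <= `|x - y| + `|y - z|.
Proof.
have -> : x - z = (x - y) + (y - z) by rewrite addrA subrK.
exact: ler_normD.
Qed.

Lemma cont_ed (V W : normedModType R) (f : V -> W) x : {for x, continuous f} ->
  forall e, 0 < e -> exists2 d, 0 < d & forall z, `|x - z| < d -> `|f x - f z| < e.
Proof.
move=> fc e e0.
have : \forall z \near x, `|f x - f z| < e by exact: cvgr_dist_lt.
by move=> /nbhs_normE [d d0 H]; exists d.
Qed.

Lemma ninfty_ex (Q : R -> Prop) (a : R) : (\forall s \near -oo, Q s) ->
  exists τ, τ <= a /\ forall s, s <= τ -> Q s.
Proof.
move=> [M [Mr HM]]; exists (Num.min a (M - 1)); split; first by rewrite ge_min lexx.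
move=> s; rewrite le_min => /andP[_ sM]; apply: HM.
by apply: le_lt_trans sM _; rewrite ltrBlDr ltrDl.
Qed.

Lemma expR_le_ln (c τ : R) : 0 < c -> τ <= ln c -> expR τ <= c.
Proof. by move=> c0 tl; rewrite -[c]lnK ?posrE // ler_expR. Qed.

Lemma near_prod_helper (V : normedModType R) (y : V) (P : R -> V -> Prop) (r m : R) :
  0 < r -> (forall x' τ, `|y - x'| < r -> τ < m -> P τ x') ->
  \forall x' \near y & τ \near -oo, P τ x'.
Proof.
move=> r0 H.
exists ([set x' | `|y - x'| < r], [set τ | τ < m]).
  split => /=; last by exists m; split => //; rewrite num_real.
  by rewrite -nbhs_nbhs_norm; exists r.
by case=> x' τ [/= ? ?]; apply: H.
Qed.

Lemma cover_attr (V : normedModType R) (K W : set V) (U : R -> set V) (e a : R) :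
  0 < e -> compact K -> (forall a b, a <= b -> U a `<=` U b) ->
  (forall y, K y -> ~ (exists2 w, W w & `|y - w| < e) -> exists τ, ~ closure (U τ) y) ->
  exists τ, τ <= a /\ exists2 g, 0 < g & forall k z, K k -> U τ z -> `|z - k| < g ->
     exists2 w, W w & `|z - w| < e + e.
Proof.
move=> e0 cK Umono Hy.
have HK : \forall τ \near -oo, K `<=` (fun x' => (exists2 w, W w & `|x' - w| < e) \/
     (forall z, U τ z -> expR τ <= `|z - x'|)).
  move: cK => /compact_near_coveringP cK.
  apply: (cK R (ninfty_nbhs R) (fun τ x' => (exists2 w, W w & `|x' - w| < e) \/ (forall z, U τ z -> expR τ <= `|z - x'|))) => // y Ky.
  case: (pselect (exists2 w, W w & `|y - w| < e)) => [[w Ww yw]|nW].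
    apply: (@near_prod_helper _ _ _ (e - `|y - w|) 0) => [|x' τ yx _].
      by rewrite subr_gt0.
    left; exists w => //.
    have := @tri _ x' y w; rewrite (distrC x' y); lra.
  have [τ nc] := Hy y Ky nW.
  have [ρ ρ0 Hρ] : exists2 ρ, 0 < ρ & forall a, U τ a -> ρ <= `|y - a|.
    case: (pselect (exists2 ρ, 0 < ρ & forall a, U τ a -> ρ <= `|y - a|)) => // nex.
    exfalso; apply: nc; apply/closureN => ρ ρ0; apply: contrapT => nH.
    apply: nex; exists ρ => // a0 Ua; rewrite leNgt; apply/negP => lt.
    by apply: nH; exists a0.
  apply: (@near_prod_helper _ _ _ (ρ/2) (Num.min τ (ln (ρ/2)))) => [|x' τ' yx].
    by rewrite divr_gt0.
  rewrite lt_min => /andP[t1 t2]; right => z Uz.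
  have := Hρ z (Umono τ' τ (ltW t1) z Uz).
  have := expR_le_ln _ _ (divr_gt0 ρ0 (ltr0Sn _ 1)) (ltW t2).
  have := @tri _ y x' z; rewrite (distrC x' z); lra.
have [τ [τa Hτ]] := ninfty_ex _ (Num.min a (ln e)) HK.
move: τa; rewrite le_min => /andP[τa τe].
exists τ; split => //; exists (expR τ); first exact: expR_gt0.
move=> k z Kk Uz zk.
case: (Hτ τ (lexx _) k Kk) => [[w Ww kw]|H2].
  exists w => //; have := @tri _ z k w; have := expR_le_ln _ _ e0 τe; lra.
by have := H2 z Uz; rewrite leNgt zk.
Qed.

Lemma cover_inv (V W : normedModType R) (A : set V) (f : V -> W) x :
  compact A -> continuous f -> ~ (f @` A) x ->
  exists2 e, 0 < e & forall y z, A y -> `|y - z| < e -> e <= `|f z - x|.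
Proof.
move=> cA fc nx.
have HA : \forall τ \near -oo, A `<=` (fun y' =>
    forall z, `|y' - z| < expR τ -> expR τ <= `|f z - x|).
  move: cA => /compact_near_coveringP cA.
  apply: (cA R (ninfty_nbhs R) (fun τ y' => forall z, `|y' - z| < expR τ -> expR τ <= `|f z - x|)) => // y Ay.
  have d0 : 0 < `|f y - x|.
    rewrite normr_gt0 subr_eq0; apply/negP => /eqP fyx; apply: nx; by exists y.
  have [ρ ρ0 Hρ] := @cont_ed _ _ f y (fc y) _ (divr_gt0 d0 (ltr0Sn _ 1)).
  apply: (@near_prod_helper _ _ _ (ρ/2) (Num.min (ln (ρ/2)) (ln (`|f y - x|/2))))
    => [|y' τ yy]; first by rewrite divr_gt0.
  rewrite lt_min => /andP[t1 t2] z y'z.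
  have := expR_le_ln _ _ (divr_gt0 ρ0 (ltr0Sn _ 1)) (ltW t1).
  have := expR_le_ln _ _ (divr_gt0 d0 (ltr0Sn _ 1)) (ltW t2).
  move=> e1 e2.
  have yz : `|y - z| < ρ by have := @tri _ y y' z; lra.
  have := Hρ z yz.
  have := @tri _ (f y) (f z) x; lra.
have [τ [_ Hτ]] := ninfty_ex _ 0 HA.
by exists (expR τ); [exact: expR_gt0 | move=> y z Ay; exact: Hτ τ (lexx _) y Ay z].
Qed.


Variable V : normedModType R.

Lemma hdist_ge0 (A B : set V) : (0 <= hdist A B)%E.
Proof. by apply: ereal_sup_ubound; left. Qed.

Lemma hdist_le (A B : set V) (e : R) : 0 <= e ->
  (forall x, A x -> exists2 y, B y & `|x - y| < e) -> (hdist A B <= e%:E)%E.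
Proof.
move=> e0 H; apply: ub_ereal_sup => _ [->|[x Ax <-]].
  by rewrite lee_fin.
have [y By xy] := H x Ax.
apply: (le_trans (ereal_inf_lbound _)); first by exists y.
by rewrite lee_fin ltW.
Qed.

Lemma hdist_lt (A B : set V) (e : R) x : (hdist A B < e%:E)%E -> A x ->
  exists2 y, B y & `|x - y| < e.
Proof.
move=> hl Ax.
have : (ereal_inf [set (`|x - y|)%:E | y in B] < e%:E)%E.
  apply: le_lt_trans hl; apply: ereal_sup_ubound; right; by exists x.
move=> /ereal_inf_lt [_ [y By <-]]; rewrite lte_fin => ?; by exists y.
Qed.

Lemma setnorm_le (D : set V) (M : R) x : (setnorm D <= M%:E)%E -> D x -> `|x| <= M.
Proof.
move=> H Dx; rewrite -lee_fin; apply: le_trans H.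
by apply: ereal_sup_ubound; right; exists x.
Qed.

Lemma setnorm_ge0 (D : set V) : (0 <= setnorm D)%E.
Proof. by apply: ereal_sup_ubound; left. Qed.

Lemma setnorm_bound (D : set V) (M : R) : 0 <= M -> (forall x, D x -> `|x| <= M) ->
  (setnorm D <= M%:E)%E.
Proof.
move=> M0 H; apply: ub_ereal_sup => _ [->|[x Dx <-]]; first by rewrite lee_fin.
by rewrite lee_fin; apply: H.
Qed.

End H4.

Lemma cvg0_ev (R : realType) T (F : set_system T) (FF : Filter F) (f : T -> \bar R) (e : R) :
  f @ F --> 0%E -> 0 < e -> \forall s \near F, (f s < e%:E)%E.
Proof.
move=> fc e0; have := fc [set y | (y < e%:E)%E]; apply. apply: open_ereal_lt'; by rewrite lte_fin.
Qed.

Lemma ev_cvg0 (R : realType) T (F : set_system T) (FF : Filter F) (f : T -> \bar R) :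
  (forall s, (0 <= f s)%E) ->
  (forall e : R, 0 < e -> \forall s \near F, (f s <= e%:E)%E) -> f @ F --> 0%E.
Proof.
move=> f0 H A /nbhs_EFin /nbhs_normP [e /= e0 HA].
apply: filterS (H (e/2) (divr_gt0 e0 (ltr0Sn _ _))) => s fs.
have : f s \is a fin_num.
  by rewrite ge0_fin_numE ?f0 //; apply: le_lt_trans fs _; rewrite ltry.
move=> finf; rewrite /preimage /=; move: fs (f0 s) finf; case: (f s) => [r| |] //= rl r0 _.
apply: (HA r) => /=; rewrite /ball /= sub0r normrN ger0_norm -?lee_fin //.
rewrite -lte_fin; apply: le_lt_trans rl _; rewrite lte_fin; by rewrite ltr_pdivrMr // ltr_pMr // ltr1n.
Qed.

Theorem corollary2p7 (R : realType)
  (X : R -> completeNormedModType R)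
  (S : forall t s : R, X s -> X t)
  (B : forall t : R, set (X t))
  (P N : forall t s : R, set (X t))
  (Y : R -> completeNormedModType R)
  (iota : forall t : R, {linear Y t -> X t})
  (h : R -> R) :
  is_process S ->
  pullback_absorber S B ->
  (forall t s, s <= t -> S t s @` B s = [set p + n | p in P t s & n in N t s]) ->
  (forall t, setnorm (P t s) @[s --> -oo] --> 0%E) ->
  (forall t s, s <= t -> compact (N t s)) ->
  (* Y_t is (injectively) embedded in X_t *)
  (forall t, injective (iota t)) ->
  (* the embedding is compact: bounded sets of Y_t are relatively compact in X_t *)
  (forall t (A : set (Y t)), (exists M : R, forall y, A y -> `|y| <= M) ->
     compact (closure (iota t @` A))) ->
  (* sup_{s <= t} ||I_s||_{L(Y_s,X_s)} < oo *)
  (forall t, exists C : R, forall s, s <= t -> forall y : Y s,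
     `|iota s y| <= C * `|y|) ->
  (* closed balls of Y_t are closed in X_t *)
  (forall t (y0 : Y t) (r : R), closed (iota t @` [set y | `|y - y0| <= r])) ->
  (forall t, ereal_sup [set Ysetnorm (iota t) (N t s) | s in `]-oo, t] ] = (h t)%:E) ->
  is_tdga S (omega_lim S B) /\
  pullback_bounded (omega_lim S B) /\
  (forall A : forall t : R, set (X t),
     is_tdga S A -> pullback_bounded A -> A = omega_lim S B) /\
  (forall t, (Ysetnorm (iota t) (omega_lim S B t) <= (h t)%:E)%E).
Proof.
move=> [Sid [Scont Scomp]] [Bpb Babs] Hdec HP HNc Hinj Hcpt HC Hball Hh.
pose U := fun t τ => [set z : X t | exists s, s <= τ /\ exists2 b, B s b & S t s b = z].
have Ueq : forall t τ, \bigcup_(s in `]-oo, τ]) (S t s @` B s) = U t τ.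
  move=> t τ; apply/seteqP; split => z /=.
    by case=> s; rewrite /= in_itv /= => sτ [b Bb <-]; exists s; split => //; exists b.
  by case=> s [sτ [b Bb <-]]; exists s; [rewrite /= in_itv /= | exists b].
have omE : forall t x, omega_lim S B t x <-> forall τ, τ <= t -> closure (U t τ) x.
  move=> t x; rewrite /omega_lim; split.
    by move=> H τ τt; rewrite -Ueq; apply: H; rewrite /= in_itv /=.
  by move=> H τ; rewrite /= in_itv /= => τt; rewrite Ueq; apply: H.
have Umono : forall t a b, a <= b -> U t a `<=` U t b.
  by move=> t a b ab z [s [sa Hb]]; exists s; split => //; apply: le_trans ab.
pose K := fun t => iota t @` [set y | `|y - 0| <= h t].
have YN : forall t s, s <= t -> (Ysetnorm (iota t) (N t s) <= (h t)%:E)%E.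
  move=> t s st; rewrite -Hh; apply: ereal_sup_ubound; exists s => //; rewrite /= in_itv /=.
have h0 : forall t, 0 <= h t.
  move=> t; rewrite -lee_fin; apply: le_trans (YN t t (lexx t)).
  rewrite /Ysetnorm; case: asboolP => _; last by rewrite leey.
  by apply: ereal_sup_ubound; left.
have NK : forall t s, s <= t -> N t s `<=` K t.
  move=> t s st n Nn; have := YN t s st; rewrite /Ysetnorm; case: asboolP => [sub|_]; last by rewrite leye_eq.
  have [y _ yn] := sub n Nn; move=> H; exists y => //=; rewrite subr0 -lee_fin; apply: le_trans H.
  by apply: ereal_sup_ubound; right; exists y => //; rewrite /preimage /= yn.
have Kcl : forall t, closed (K t) by move=> t; exact: Hball.
have Kc : forall t, compact (K t).
  move=> t; rewrite ((closure_id _).1 (Kcl t)); apply: Hcpt; exists (h t) => y /=.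
  by rewrite subr0.
have Dec : forall t s b, s <= t -> B s b -> exists p n, [/\ P t s p, N t s n & S t s b = p + n].
  move=> t s b st Bb; have : (S t s @` B s) (S t s b) by exists b.
  by rewrite Hdec // => -[p Pp [n Nn pn]]; exists p, n.
have Pev : forall t a e, 0 < e -> exists τ, τ <= a /\ forall s, s <= τ -> forall p, P t s p -> `|p| < e.
  move=> t a e e0.
  have H1 : \forall s \near -oo, (setnorm (P t s) < e%:E)%E by exact: cvg0_ev (HP t) e0.
  have [τ [τa Hτ]] := @ninfty_ex R _ a H1; exists τ; split => // s sτ p Pp.
  rewrite -lte_fin; apply: le_lt_trans (Hτ s sτ); apply: ereal_sup_ubound; right; by exists p.
pose om := omega_lim S B.
have Om_K : forall t, om t `<=` K t.
  move=> t x /omE Hx; rewrite ((closure_id _).1 (Kcl t)); apply/closureN => e e0.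
  have e20 : 0 < e / 2 by rewrite divr_gt0.
  have [τ [τt Hτ]] := Pev t t (e/2) e20.
  have [z [s [sτ [b Bb <-]]] xz] := (closureN _ _ _ _).1 (Hx τ τt) (e/2) e20.
  have st : s <= t by apply: le_trans τt.
  have [p [n [Pp Nn Seq]]] := Dec t s b st Bb.
  exists n; first exact: NK t s st n Nn.
  have := Hτ s sτ p Pp; rewrite Seq in xz; have := @tri R _ x (p + n) n.
  rewrite addrK; lra.
have Om_closed : forall t, closed (om t).
  by move=> t; apply: closed_bigI => τ _; exact: closed_closure.
have Om_cpt : forall t, compact (om t).
  by move=> t; apply: subclosed_compact (Om_closed t) (Kc t) (Om_K t).
have Om_B : forall t, om t `<=` closure (B t).
  move=> t x /omE Hx; have [t0 [t0t Ht0]] := Babs B Bpb t.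
  apply: closureS (Hx t0 t0t) => z [s [st0 [b Bb <-]]]; apply: (Ht0 s st0); by exists b.
have Om_pb : pullback_bounded om.
  move=> t; have [M HM] := Bpb t; exists M => s st.
  have M0 : 0 <= M.
    by rewrite -lee_fin; apply: le_trans (HM t (lexx t)); exact: setnorm_ge0.
  apply: setnorm_bound => // x /Om_B /closureN Hx.
  apply/ler_addgt0Pr => e e0; have [b Bb xb] := Hx e e0.
  have := @setnorm_le R _ _ _ _ (HM s st) Bb; have := @tri R _ x b 0; rewrite !subr0; lra.
have Inv1 : forall t s, s <= t -> S t s @` om s `<=` om t.
  move=> t s st _ [x /omE Hx <-]; apply/omE => τ τt; apply/closureN => e e0.
  have [d d0 Hd] := @cont_ed R _ _ (S t s) x (Scont t s st x) e e0.
  have ms : Num.min τ s <= s by rewrite ge_min lexx orbT.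
  have [z [r [rm [b Bb <-]]] xz] := (closureN _ _ _ _).1 (Hx (Num.min τ s) ms) d d0.
  move: rm; rewrite le_min => /andP[rτ rs].
  exists (S t r b); first by exists r; split => //; exists b.
  rewrite -(Scomp t s r rs st); exact: Hd.
have Attr : forall D, pullback_bounded D -> forall t,
    hdist (S t s @` D s) (om t) @[s --> -oo] --> 0%E.
  move=> D Dpb t; apply: ev_cvg0 => [s|e e0]; first exact: hdist_ge0.
  have e20 : 0 < e / 2 by rewrite divr_gt0.
  have side : forall y, K t y -> ~ (exists2 w, om t w & `|y - w| < e / 2) ->
      exists τ, ~ closure (U t τ) y.
    move=> y Ky nw; apply: contrapT => nex; apply: nw; exists y; last by rewrite subrr normr0.
    apply/omE => τ _; apply: contrapT => nc; apply: nex; by exists τ.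
  have [τ [τt [g g0 Hg]]] := @cover_attr R _ (K t) (om t) (U t) (e/2) t e20 (Kc t) (Umono t) side.
  have [r [rτ Hr]] := Pev t τ g g0.
  have rt : r <= t by apply: le_trans τt.
  have [t0 [t0r Ht0]] := Babs D Dpb r.
  exists t0; split; first exact: num_real.
  move=> s st0; apply: hdist_le; first exact: ltW.
  move=> _ [x Dx <-].
  have Sx : B r (S r s x) by apply: (Ht0 s (ltW st0)); exists x.
  have sr : s <= r by apply: le_trans t0r; exact: ltW.
  have [p [n [Pp Nn Seq]]] := Dec t r _ rt Sx.
  have SE : S t s x = S t r (S r s x) by rewrite Scomp.
  have Uz : U t τ (S t s x) by exists r; split => //; exists (S r s x).
  have zn : `|S t s x - n| < g by rewrite SE Seq addrK; exact: Hr r (lexx r) p Pp.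
  have [w Ww zw] := Hg n (S t s x) (NK t r rt n Nn) Uz zn.
  by exists w => //; move: zw; rewrite -splitr.
have Inv2 : forall t s, s <= t -> om t `<=` S t s @` om s.
  move=> t s st x ox; apply: contrapT => nx.
  have [e e0 He] := @cover_inv R _ _ (om s) (S t s) x (Om_cpt s) (Scont t s st) nx.
  have H1 : \forall r \near -oo, (hdist (S s r @` B r) (om s) < e%:E)%E.
    exact: cvg0_ev (Attr B Bpb s) e0.
  have [τ [τs Hτ]] := @ninfty_ex R _ s H1.
  have [z [r [rτ [b Bb <-]]] xz] := (closureN _ _ _ _).1 ((omE t x).1 ox τ (le_trans τs st)) e e0.
  have rs : r <= s by apply: le_trans τs.
  have [w Ww bw] := @hdist_lt R _ _ _ _ (S s r b) (Hτ r rτ) (ex_intro2 _ _ b Bb erefl).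
  have := He w (S s r b) Ww; rewrite distrC bw => /(_ isT).
  by rewrite (Scomp t s r rs st) distrC leNgt xz.
have Inv : forall t s, s <= t -> S t s @` om s = om t.
  by move=> t s st; apply/seteqP; split; [exact: Inv1 | exact: Inv2].
have AB : forall A : forall t, set (X t), is_tdga S A -> pullback_bounded A -> forall s, A s `<=` B s.
  move=> A [_ [Ainv _]] Apb s; have [t0 [t0s Ht0]] := Babs A Apb s.
  by rewrite -(Ainv s t0 t0s); exact: Ht0.
split; [split; [exact: Om_cpt | split; [exact: Inv | exact: Attr]] | split; [exact: Om_pb | split]].
  move=> A Atd Apb; have [Acpt [Ainv Aattr]] := Atd.
  apply: functional_extensionality_dep => t; apply/seteqP; split.
    move=> x Ax; apply/omE => τ τt; apply: subset_closure.
    rewrite -(Ainv t τ τt) in Ax; case: Ax => a Aa <-.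
    by exists τ; split => //; exists a => //; exact: AB Atd Apb τ a Aa.
  move=> x ox.
  have Acl : closed (A t) by apply: compact_closed; [exact: norm_hausdorff | exact: Acpt].
  rewrite ((closure_id _).1 Acl); apply/closureN => e e0.
  have H1 : \forall s \near -oo, (hdist (S t s @` om s) (A t) < e%:E)%E.
    exact: cvg0_ev (Aattr om Om_pb t) e0.
  have [τ [τt Hτ]] := @ninfty_ex R _ t H1.
  have := Hτ τ (lexx τ); rewrite (Inv t τ τt) => hl.
  exact: @hdist_lt R _ _ _ _ x hl ox.
move=> t; rewrite /Ysetnorm; case: asboolP => [_|nsub].
  apply: ub_ereal_sup => _ [-> | [y oy <-]]; first by rewrite lee_fin h0.
  have [y' /= y'h ey] := Om_K t _ oy.
  by rewrite lee_fin -(Hinj t _ _ ey) -(subr0 y').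
exfalso; apply: nsub => x ox; have [y _ <-] := Om_K t x ox; by exists y.
Qed.
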